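(* Let $R$ be a local integral domain and $\mathcal O$ a valuation ring of $\mathrm{Frac}(R)$. Then the additive index $[R:\mathcal O\cap R]$ is finite if and only if $R\subseteq\mathcal O$.
   Context: Rings are commutative with identity. A valuation ring of a field $K$ is a subring $\mathcal O$ with $x\in\mathcal O$ or $x^{-1}\in\mathcal O$ for every nonzero $x\in K$. *)

(* Defs.v *)
From HB Require Import structures.
From mathcomp Require Import all_boot all_order all_algebra fraction.
Set Implicit Arguments. Unset Strict Implicit. Unset Printing Implicit Defensive.
Import GRing.Theory.
Local Open Scope ring_scope.

Definition is_ideal (A : comNzRingType) (I : A -> Prop) : Prop :=
  I 0 /\ (forall x y, I x -> I y -> I (x + y)) /\ (forall a x, I x -> I (a * x)).

Definition is_maximal_ideal (A : comNzRingType) (M : A -> Prop) : Prop :=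
  is_ideal M /\ ~ M 1 /\
  (forall J : A -> Prop, is_ideal J -> (forall x, M x -> J x) ->
     (forall x, J x <-> M x) \/ J 1).

Definition is_local (A : comNzRingType) : Prop :=
  exists M : A -> Prop, is_maximal_ideal M /\
    forall N : A -> Prop, is_maximal_ideal N -> forall x, N x <-> M x.

Definition is_subring (A : comNzRingType) (S : A -> Prop) : Prop :=
  S 1 /\ (forall x y, S x -> S y -> S (x - y)) /\ (forall x y, S x -> S y -> S (x * y)).

Definition is_valuation_ring (K : fieldType) (O : K -> Prop) : Prop :=
  is_subring O /\ forall x : K, x != 0 -> O x \/ O x^-1.

Definition finite_add_index (A : zmodType) (S : A -> Prop) : Prop :=
  exists s : seq A, forall r : A, exists2 t, t \in s & S (r - t).

(* Main.v *)
Require Import Defs.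
From mathcomp Require Import all_boot all_order all_algebra fraction.
From mathcomp Require Import ring.
From Stdlib Require Import Classical ClassicalEpsilon.
Set Implicit Arguments. Unset Strict Implicit. Unset Printing Implicit Defensive.
Import GRing.Theory.
Local Open Scope ring_scope.

Section Val.
Variables (K : fieldType) (O : K -> Prop).
Hypothesis hO : is_valuation_ring O.

Lemma vO1 : O 1. Proof. by case: hO => [[]]. Qed.
Lemma vOB x y : O x -> O y -> O (x - y). Proof. by case: hO => [[_ [h _]] _]; apply: h. Qed.
Lemma vOM x y : O x -> O y -> O (x * y). Proof. by case: hO => [[_ [_ h]] _]; apply: h. Qed.
Lemma vO0 : O 0. Proof. by have := vOB vO1 vO1; rewrite subrr. Qed.
Lemma vON x : O x -> O (- x). Proof. by move=> h; rewrite -sub0r; apply: vOB=>//; apply: vO0. Qed.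
Lemma vOD x y : O x -> O y -> O (x + y).
Proof. by move=> h1 h2; rewrite -(opprK y); apply: vOB=>//; apply: vON. Qed.
Lemma vOX x n : O x -> O (x ^+ n).
Proof. move=> h; elim: n => [|n IH]; first by rewrite expr0; exact: vO1. by rewrite exprS; apply: vOM. Qed.

Lemma pow_in x n : O (x ^+ n.+1) -> O x.
Proof.
move=> h; have [->|x0] := eqVneq x 0; first exact: vO0.
case: hO => _ /(_ x x0) [//|hi].
have -> : x = x ^+ n.+1 * (x^-1) ^+ n.
  by rewrite exprS exprVn -mulrA mulfV ?mulr1 // expf_neq0.
by apply: vOM => //; apply: vOX.
Qed.

Lemma key x m k : O (x ^+ m.+1 * (x ^+ k.+1 - 1)) -> O x.
Proof.
move=> hz; set a := x ^+ k.+1 in hz; set b := x ^+ m.+1 in hz.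
have [a1|a1] := eqVneq a 1.
  by apply: (@pow_in x k); rewrite -/a a1; exact: vO1.
have a10 : a - 1 != 0 by rewrite subr_eq0.
case: hO => _ /(_ _ a10) [h|h].
  apply: (@pow_in x k); rewrite -/a -(subrK 1 a); apply: vOD => //; exact: vO1.
apply: (@pow_in x (m + k.+1)%N).
have -> : x ^+ (m + k.+1).+1 = b * (a - 1) * (1 + (a - 1)^-1).
  rewrite -addSn exprD -/a -/b; field; exact: a10.
by apply: vOM => //; apply: vOD => //; exact: vO1.
Qed.
End Val.

Theorem mainTheorem16 (R : idomainType) (O : {fraction R} -> Prop) :
  is_local R -> is_valuation_ring O ->
  (finite_add_index (fun r : R => O (tofrac r)) <-> (forall r : R, O (tofrac r))).
Proof.
move=> _ hO; split; last first.
  by move=> h; exists [:: 0] => r; exists 0; rewrite ?inE // subr0.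
case=> s hs r.
have hg : forall i : nat, exists t, t \in s /\ O (tofrac (r ^+ i.+1 - t)).
  by move=> i; case: (hs (r ^+ i.+1)) => t ht1 ht2; exists t.
pose g i := proj1_sig (constructive_indefinite_description _ (hg i)).
have gP i : g i \in s /\ O (tofrac (r ^+ i.+1 - g i)).
  exact: (proj2_sig (constructive_indefinite_description _ (hg i))).
have Hf : forall i, (index (g i) s < size s)%N by move=> i; rewrite index_mem; case: (gP i).
pose f := fun i : 'I_(size s).+1 => Ordinal (Hf i).
have nf : ~ injective f.
  by move=> /leq_card; rewrite !card_ord ltnn.
have [i [j [fij nij]]] : exists i j, f i = f j /\ i <> j.
  apply: NNPP => hn; apply: nf => i j fij; apply: NNPP => nij.
  by apply: hn; exists i, j.
have gij : g i = g j.
  have := congr1 val fij => /= e.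
  by rewrite -(nth_index 0 (proj1 (gP i))) e nth_index //; case: (gP j).
have hd : O (tofrac (r ^+ i.+1) - tofrac (r ^+ j.+1)).
  have -> : tofrac (r ^+ i.+1) - tofrac (r ^+ j.+1) =
     tofrac (r ^+ i.+1 - g i) - tofrac (r ^+ j.+1 - g j).
    by rewrite gij !rmorphB /=; ring.
  by apply: vOB => //; [case: (gP i) | case: (gP j)].
rewrite !rmorphXn /= in hd.
set x := tofrac r in hd *.
have ne : (i : nat) <> j by move=> e; apply: nij; apply: val_inj.
move: hd ne; clear fij nij gij; move: (i : nat) (j : nat) => {i j} i j hd ne.
wlog lij : i j hd ne / (i < j)%N.
  move=> W; case: (ltngtP i j) => [l|l|e]; first exact: W hd ne l.
    apply: (W j i) => //; last by move=> e; apply: ne; rewrite e.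
    by rewrite -opprB; apply: vON.
  by case: ne.
apply: (@key _ O hO x i (j - i.+1)%N).
have -> : x ^+ i.+1 * (x ^+ (j - i.+1).+1 - 1) = - (x ^+ i.+1 - x ^+ j.+1).
  rewrite mulrBr mulr1 -exprD opprB; congr (_ - _); congr (_ ^+ _).
  by rewrite -subSn // addSn subnKC // ltnW.
exact: vON.
Qed.
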